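(* Let $\mathbb{F}_q$ be a finite field and let $\mathcal{M}=\mathbb{F}_q\times\mathbb{F}_q^{*}\times\mathbb{F}_q$ with the relation: $(x_1,y_1,z_1)$ and $(x_2,y_2,z_2)$ commute iff $x_1y_2-y_1x_2=z_1-z_2$. Then: (1) every abelian subset of $\mathcal{M}$ has cardinality at most $q$; (2) there is no partition of $\mathcal{M}$ into fewer than $q(q-1)$ abelian subsets; (3) the maximum cardinality of an abelian subset of $\mathcal{M}$ that is not contained in a strictly larger abelian subset is $q$.
   Context: A subset of $\mathcal{M}$ is abelian if any two distinct elements of it commute. *)

(* Defs.v *)
From mathcomp Require Import all_boot all_order all_algebra all_field.
Set Implicit Arguments. Unset Strict Implicit. Unset Printing Implicit Defensive.
Import GRing.Theory.
Local Open Scope ring_scope.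

(* Elements of M = F_q x F_q^* x F_q are represented as triples ((x, y), z)
   of F * F * F, restricted to the set Mset where y != 0. *)
Definition Mset (F : finFieldType) : {set F * F * F} :=
  [set t : F * F * F | t.1.2 != 0].

Definition Mcommute (F : finFieldType) (u v : F * F * F) : bool :=
  u.1.1 * v.1.2 - u.1.2 * v.1.1 == u.2 - v.2.

Definition Mabelian (F : finFieldType) (A : {set F * F * F}) : bool :=
  [forall u in A, forall v in A, (u != v) ==> Mcommute u v].

Definition Mabelian_sub (F : finFieldType) (A : {set F * F * F}) : bool :=
  (A \subset Mset F) && Mabelian A.

(* Main.v *)
Require Import Defs.
From mathcomp Require Import all_boot all_order all_algebra all_field.
From mathcomp Require Import ring.
Set Implicit Arguments. Unset Strict Implicit. Unset Printing Implicit Defensive.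
Import GRing.Theory.
Local Open Scope ring_scope.

Lemma commAll (F : finFieldType) (A : {set F * F * F}) : Mabelian A ->
  forall u v, u \in A -> v \in A -> u.1.1 * v.1.2 - u.1.2 * v.1.1 = u.2 - v.2.
Proof.
move=> /forallP abA u v uA vA; case: (eqVneq u v) => [->|neq].
  by rewrite [X in X - _]mulrC !subrr.
by have := abA u; rewrite uA /= => /forall_inP/(_ v vA); rewrite neq /= => /eqP.
Qed.

Lemma ab_le (F : finFieldType) (A : {set F * F * F}) : Mabelian_sub A -> (#|A| <= #|F|)%N.
Proof.
case/andP=> _ abA; have C := commAll abA.
have F1 : (1 <= #|F|)%N by apply/card_gt0P; exists 0.
case: (set_0Vmem A) => [->|[u0 u0A]]; first by rewrite cards0.
case: (boolP [exists u1 in A, u1 != u0]) => [/exists_inP[u1 u1A n10]|nex].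
  pose d1 := u1.1.1 - u0.1.1; pose d2 := u1.1.2 - u0.1.2.
  have key : forall v, v \in A -> (v.1.1 - u0.1.1) * d2 = (v.1.2 - u0.1.2) * d1.
    move=> v vA; have h1 := C v u1 vA u1A; have h2 := C v u0 vA u0A;
    have h3 := C u0 u1 u0A u1A.
    apply/eqP; rewrite -subr_eq0.
    have E : (v.1.1 - u0.1.1) * d2 - (v.1.2 - u0.1.2) * d1 =
      (v.1.1 * u1.1.2 - v.1.2 * u1.1.1) - (v.1.1 * u0.1.2 - v.1.2 * u0.1.1)
      - (u0.1.1 * u1.1.2 - u0.1.2 * u1.1.1) by rewrite /d1 /d2; ring.
    by rewrite E h1 h2 h3; apply/eqP; ring.
  have pinj : forall v w, v \in A -> w \in A -> v.1 = w.1 -> v = w.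
    move=> [[a b] c] [[a' b'] c'] vA wA /= [ea eb]; subst a' b'.
    have := C _ _ vA wA => /=; rewrite [X in X - _]mulrC subrr => /eqP.
    by rewrite eq_sym subr_eq0 => /eqP ->.
  have dn : (d1 != 0) || (d2 != 0).
    apply: contraT; rewrite negb_or !negbK /d1 /d2 !subr_eq0 => /andP[/eqP e1 /eqP e2].
    move: n10; rewrite (pinj u1 u0 u1A u0A) ?eqxx //.
    by case: (u1) e1 e2 => [[? ?] ?]; case: (u0) => [[? ?] ?] /= -> ->.
  pose f (v : F * F * F) := if d1 != 0 then v.1.1 else v.1.2.
  have finj : {in A &, injective f}.
    move=> v w vA wA; rewrite /f; have kv := key v vA; have kw := key w wA.
    case: ifP => hd1 e; apply: pinj => //.
      have : (v.1.2 - u0.1.2) * d1 = (w.1.2 - u0.1.2) * d1 by rewrite -kv -kw e.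
      move/(mulIf hd1)/addIr; case: (v) (w) e => [[? ?] ?] [[? ?] ?] /= -> ->; done.
    move: dn; rewrite hd1 /= => hd2; move/negbFE/eqP: hd1 => hd1.
    have : (v.1.1 - u0.1.1) * d2 = (w.1.1 - u0.1.1) * d2 by rewrite kv kw hd1 !mulr0.
    move/(mulIf hd2)/addIr; case: (v) (w) e => [[? ?] ?] [[? ?] ?] /= -> ->; done.
  by rewrite -(card_in_imset finj) max_card.
apply: (leq_trans _ F1); rewrite -(cards1 u0); apply: subset_leq_card.
apply/subsetP=> v vA; rewrite inE; apply: contraR nex => nv.
by apply/exists_inP; exists v.
Qed.

Theorem theorem6p6 (F : finFieldType) :
  (forall A : {set F * F * F}, Mabelian_sub A -> (#|A| <= #|F|)%N)
  /\ (forall P : {set {set F * F * F}},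
        partition P (Mset F) -> (forall B, B \in P -> Mabelian B) ->
        (#|F| * (#|F| - 1) <= #|P|)%N)
  /\ ((exists A : {set F * F * F}, maxset (@Mabelian_sub F) A /\ #|A| = #|F|)
      /\ (forall A : {set F * F * F}, maxset (@Mabelian_sub F) A -> (#|A| <= #|F|)%N)).
Proof.
have F0 : (0 < #|F|)%N by apply/card_gt0P; exists 0.
split; first exact: ab_le.
split.
  move=> P partP abP.
  have cM : #|Mset F| = (#|F| * (#|F| - 1) * #|F|)%N.
    have -> : Mset F = setX (setX [set: F] [set~ 0]) [set: F].
      by apply/setP => -[[a b] c]; rewrite !inE /= andbT.
    by rewrite !cardsX cardsC1 cardsT subn1.
  rewrite -(leq_pmul2r F0) -cM (card_partition partP).
  rewrite -sum_nat_const; apply: leq_sum => B BP; apply: ab_le.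
  rewrite /Mabelian_sub abP // andbT; case/and3P: partP => /eqP <- _ _.
  exact: bigcup_sup.
split; last by move=> A /maxsetP[/ab_le].
pose A := [set ((t, 1 : F), t) | t : F].
have abA : Mabelian_sub A.
  apply/andP; split.
    by apply/subsetP => _ /imsetP[t _ ->]; rewrite inE /= oner_neq0.
  apply/forallP => u; apply/implyP => /imsetP[t _ ->].
  apply/forall_inP => _ /imsetP[s _ ->]; apply/implyP => _.
  by rewrite /Mcommute /= mulr1 mul1r.
have cA : #|A| = #|F|.
  by rewrite card_imset // => s t [].
exists A; split => //; apply/maxsetP; split => // B abB sAB.
apply/eqP; rewrite eq_sym eqEcard sAB cA; exact: ab_le.
Qed.
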